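(* Let $X$ be a Banach space, $f:X\to\mathbb{R}\cup\{+\infty\}$ lower semicontinuous and $\bar x\in[f\le0]$. Let $\tau>0$, $\delta\in(0,\infty]$ and $q\in(0,1]$. Suppose that either $X$ is Asplund or $f$ is convex, and that $d(x,[f\le0])^{q-1}d(0,\partial f(x))^q\ge\tau$ for all $x\in B_\delta(\bar x)\cap[f>0]$ with $f^q(x)<\tau\, d(x,[f\le0])$. Adopt the convention $0^0=1$. Then the condition (A) $\alpha^q(1-\alpha)^{1-q}\tau\, d(x,[f\le0])\le f_+^q(x)$ for all $\alpha\in(0,1)$ and $x\in B_{\delta/(1+\alpha)}(\bar x)$ is equivalent to the condition (B) $\alpha^q(1-\alpha)^{1-q}\tau\, d(x,[f\le0])\le f_+^q(x)$ for all $\alpha\in(0,q]$ and $x\in B_{\delta/(1+\alpha)}(\bar x)$. Condition (B) implies (C) $q^q(1-q)^{1-q}\tau\, d(x,[f\le0])\le f_+^q(x)$ for all $x\in B_{\delta/(1+q)}(\bar x)$. Moreover, condition (C) is equivalent to condition (B) with the neighbourhood $B_{\delta/(1+\alpha)}(\bar x)$ replaced by $B_{\delta/(1+q)}(\bar x)$.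
   Context: $[f\le0]=\{x: f(x)\le0\}$, $[f>0]=\{x:f(x)>0\}$, $f_+(x)=\max\{f(x),0\}$; for $f(x)\ge0$, $f^q(x):=[f(x)]^q$, $f_+^q(x)=[f_+(x)]^q$. $B_\delta(x)$ is the open ball of radius $\delta$ centered at $x$ ($B_\infty(x)=X$). $d(x,A)=\inf_{a\in A}\|x-a\|$, $d(x,\emptyset)=+\infty$. $\partial f(x)$ is the Fréchet subdifferential: $\{x^*\in X^*:\liminf_{y\to x}\frac{f(y)-f(x)-\langle x^*,y-x\rangle}{\|y-x\|}\ge0\}$ if $f(x)<+\infty$, $\emptyset$ otherwise (equal to the convex subdifferential for convex $f$); $d(0,\partial f(x))=\inf\{\|x^*\|:x^*\in\partial f(x)\}$ ($+\infty$ if empty). A Banach space is Asplund if every continuous convex function on an open convex subset is Fréchet differentiable on a dense subset. *)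

(* Defs.v *)
From HB Require Import structures.
From mathcomp Require Import all_boot all_order all_algebra.
From mathcomp Require Import all_classical all_reals all_analysis.
Set Implicit Arguments. Unset Strict Implicit. Unset Printing Implicit Defensive.
Import Order.TTheory GRing.Theory Num.Theory.
Import numFieldNormedType.Exports.
Local Open Scope classical_set_scope.
Local Open Scope ring_scope.

Section Defs.
Context {R : realType} {X : normedModType R}.

Definition cvx_set (U : set X) :=
  forall u v (t : R), U u -> U v -> 0 <= t <= 1 -> U (t *: u + (1 - t) *: v).

Definition cvx_fun_on (U : set X) (g : X -> R) :=
  forall u v (t : R), U u -> U v -> 0 <= t <= 1 ->
    g (t *: u + (1 - t) *: v) <= t * g u + (1 - t) * g v.

Definition Asplund :=
  forall (U : set X) (g : X -> R), open U -> cvx_set U ->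
    {within U, continuous g} -> cvx_fun_on U g ->
    exists D : set X, D `<=` U /\ U `<=` closure D /\
      forall x, D x -> differentiable g x.

Definition ecvx (f : X -> \bar R) :=
  forall (u v : X) (t : R), 0 < t < 1 ->
    (f (t *: u + (1 - t) *: v)%R <= t%:E * f u + (1 - t)%:E * f v)%E.

Definition is_dual (x' : X -> R) :=
  (forall (a : R) u v, x' (a *: u + v) = a * x' u + x' v) /\ continuous x'.

Definition dual_norm (x' : X -> R) : \bar R :=
  ereal_sup [set (`| x' u |)%:E | u in [set u : X | `|u| <= 1]].

(* Frechet subdifferential: x' in X^* with
   liminf_{y -> x} (f y - f x - <x', y - x>)/||y - x|| >= 0, and f x finite
   (empty when f x = +oo). The liminf condition is written out. *)
Definition frechet_subdiff (f : X -> \bar R) (x : X) : set (X -> R) :=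
  [set x' | is_dual x' /\ f x \is a fin_num /\
     forall e : R, 0 < e -> exists2 d : R, 0 < d &
       forall y, 0 < `|y - x| < d ->
         ((fine (f x) + x' (y - x) - e * `|y - x|)%:E <= f y)%E].

(* d(0, \partial f(x)) (= +oo if the subdifferential is empty) *)
Definition dist0_subdiff (f : X -> \bar R) (x : X) : \bar R :=
  ereal_inf [set dual_norm x' | x' in frechet_subdiff f x].

Definition dist (x : X) (A : set X) : \bar R :=
  ereal_inf [set (`| x - a |)%:E | a in A].

Definition eball (c : X) (r : \bar R) : set X := [set x | ((`| x - c |)%:E < r)%E].

Definition sublevel0 (f : X -> \bar R) : set X := [set x | (f x <= 0)%E].

Definition fplusq (f : X -> \bar R) (q : R) (x : X) : \bar R :=
  poweR (Order.max (f x) 0%E) q.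

(* the inequality  alpha^q (1-alpha)^(1-q) tau d(x,[f<=0]) <= f_+^q(x)
   (powR 0 0 = 1, i.e. convention 0^0 = 1) *)
Definition ineq (f : X -> \bar R) (q tau alpha : R) (x : X) : Prop :=
  (((powR alpha q * powR (1 - alpha) (1 - q) * tau)%:E * dist x (sublevel0 f)
     <= fplusq f q x)%E).

End Defs.

(* Main.v *)
Require Import Defs.
From HB Require Import structures.
From mathcomp Require Import all_boot all_order all_algebra.
From mathcomp Require Import all_classical all_reals all_analysis.
From mathcomp Require Import ring lra.
Set Implicit Arguments. Unset Strict Implicit.
Import Order.TTheory GRing.Theory Num.Theory.
Import numFieldNormedType.Exports.
Local Open Scope classical_set_scope.
Local Open Scope ring_scope.

Lemma phi_le (R : realType) (q a : R) : 0 < q <= 1 -> 0 < a < 1 ->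
  a `^ q * (1 - a) `^ (1 - q) <= q `^ q * (1 - q) `^ (1 - q).
Proof.
move=> /andP[q0 q1] /andP[a0 a1].
have [->|qlt1] := eqVneq q 1.
  by rewrite subrr !powRr0 !powRr1 ?mulr1 // ltW.
have q1' : q < 1 by rewrite lt_neqAle qlt1.
have pE : forall b x : R, 0 < b -> b `^ x = expR (x * ln b).
  by move=> b x b0; rewrite /powR gt_eqF.
have a1p : 0 < 1 - a by rewrite subr_gt0.
have q1p : 0 < 1 - q by rewrite subr_gt0.
rewrite !pE // -!expRD ler_expR.
have h1 : ln a - ln q <= a / q - 1.
  rewrite -ln_div ?posrE //.
  have := @le_ln1Dx _ (a / q - 1).
  have -> : 1 + (a / q - 1) = a / q by ring.
  apply; rewrite ltrBrDl subrr divr_gt0 //.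
have h2 : ln (1 - a) - ln (1 - q) <= (1 - a) / (1 - q) - 1.
  rewrite -ln_div ?posrE //.
  have := @le_ln1Dx _ ((1 - a) / (1 - q) - 1).
  have -> : 1 + ((1 - a) / (1 - q) - 1) = (1 - a) / (1 - q) by ring.
  apply; rewrite ltrBrDl subrr divr_gt0 //.
have h1' := ler_wpM2l (ltW q0) h1.
have h2' := ler_wpM2l (ltW q1p) h2.
have e1 : q * (a / q - 1) = a - q by field; rewrite gt_eqF.
have e2 : (1 - q) * ((1 - a) / (1 - q) - 1) = q - a by field; rewrite gt_eqF.
rewrite e1 in h1'; rewrite e2 in h2'.
have := lerD h1' h2'.
have -> : a - q + (q - a) = 0 by ring.
move=> H.
rewrite -subr_ge0.
set L := (X in 0 <= X).
have -> : L = - (q * (ln a - ln q) + (1 - q) * (ln (1 - a) - ln (1 - q))).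
  by rewrite /L; ring.
by rewrite oppr_ge0.
Qed.

Section H.
Context (R : realType) (X : completeNormedModType R).

Lemma dist_ge0 (x : X) (A : set X) : (0 <= dist x A)%E.
Proof. by apply: le_ereal_inf_tmp => _ [a _ <-]; rewrite lee_fin. Qed.

Lemma coef_ge0 (q tau a : R) : 0 < tau -> 0 <= a `^ q * (1 - a) `^ (1 - q) * tau.
Proof. by move=> t0; rewrite !mulr_ge0 ?powR_ge0 // ltW. Qed.

Lemma ineq_mono (f : X -> \bar R) (q tau a b : R) (x : X) : 0 < tau ->
  a `^ q * (1 - a) `^ (1 - q) <= b `^ q * (1 - b) `^ (1 - q) ->
  ineq f q tau b x -> ineq f q tau a x.
Proof.
move=> t0 hab; rewrite /ineq; apply: le_trans.
apply: lee_wpmul2r; first exact: dist_ge0.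
by rewrite lee_fin ler_wpM2r // ltW.
Qed.

Lemma ball_sub (c : X) (delta : \bar R) (a b : R) : (0 <= delta)%E -> 0 <= a <= b ->
  eball c (delta * ((1 + b)^-1)%:E)%E `<=` eball c (delta * ((1 + a)^-1)%:E)%E.
Proof.
move=> d0 /andP[a0 ab] x; rewrite /eball /= => H; apply: (lt_le_trans H).
apply: lee_wpmul2l => //; rewrite lee_fin lef_pV2 ?posrE; lra.
Qed.
End H.

Lemma limit1 (R : realType) (X : completeNormedModType R) (f : X -> \bar R)
  (xbar x : X) (tau : R) :
  (f xbar <= 0)%E -> 0 < tau ->
  (forall a : R, 0 < a < 1 -> ineq f 1 tau a x) -> ineq f 1 tau 1 x.
Proof.
move=> fx0 t0 H.
have H' : forall a : R, 0 < a < 1 -> ((a * tau)%:E * dist x (sublevel0 f) <= fplusq f 1 x)%E.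
  move=> a /andP[a0 a1]; have := H a; rewrite /ineq subrr powRr0 powRr1 ?mulr1; last exact: ltW.
  by apply; rewrite a0 a1.
rewrite /ineq subrr powRr0 powRr1 // mulr1 mul1r.
have dge := @dist_ge0 R X x (sublevel0 f).
have dle : (dist x (sublevel0 f) <= (`|x - xbar|)%:E)%E.
  by apply: ge_ereal_inf; exists (`|x - xbar|)%:E => //; exists xbar.
move: H' dge dle; case: (dist x (sublevel0 f)) => [r| |] //= H' r0 _.
have m0 : (0 <= Order.max (f x) 0)%E by rewrite le_max lexx orbT.
rewrite /fplusq in H' *; move: H' m0; case: (Order.max (f x) 0) => [m| |] //= H' m0.
  rewrite powRr1 ?lee_fin // in H' *.
  rewrite lee_fin in r0. have {}m0 : 0 <= m by rewrite -lee_fin.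
  rewrite leNgt; apply/negP => Hlt.
  have tr0 : 0 < tau * r by apply: (le_lt_trans m0).
  pose a := (m + tau * r) / (2 * (tau * r)).
  have a0 : 0 < a by rewrite divr_gt0 //; [lra | rewrite mulr_gt0].
  have a1 : a < 1.
    rewrite /a ltr_pdivrMr; last by rewrite mulr_gt0.
    set T := tau * r in Hlt tr0 *; lra.
  have := H' a; rewrite a0 a1 -EFinM lee_fin => /(_ isT).
  have -> : a * tau * r = (m + tau * r) / 2.
    rewrite /a; field; apply/andP; split; apply/eqP => E; move: tr0;
      by rewrite E ?mulr0 ?mul0r ltxx.
  move=> h; move: Hlt; rewrite ltNge => /negP; apply.
  move: h; clear; lra.
  by rewrite oner_eq0 leey.
Qed.

Theorem proposition3p13 (R : realType) (X : completeNormedModType R)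
  (f : X -> \bar R) (xbar : X) (tau : R) (delta : \bar R) (q : R) :
  (forall x, f x != -oo%E) ->
  lower_semicontinuous f ->
  (f xbar <= 0)%E ->
  0 < tau -> (0 < delta)%E -> 0 < q <= 1 ->
  (@Asplund R X \/ ecvx f) ->
  (forall x, eball xbar delta x -> (0 < f x)%E ->
     (poweR (f x) q < tau%:E * dist x (sublevel0 f))%E ->
     (tau%:E <= poweR (dist x (sublevel0 f)) (q - 1) * poweR (dist0_subdiff f x) q)%E) ->
  let condA := forall alpha : R, 0 < alpha < 1 -> forall x,
      eball xbar (delta * ((1 + alpha)^-1)%:E)%E x -> ineq f q tau alpha x in
  let condB := forall alpha : R, 0 < alpha <= q -> forall x,
      eball xbar (delta * ((1 + alpha)^-1)%:E)%E x -> ineq f q tau alpha x in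
  let condC := forall x,
      eball xbar (delta * ((1 + q)^-1)%:E)%E x -> ineq f q tau q x in
  let condB' := forall alpha : R, 0 < alpha <= q -> forall x,
      eball xbar (delta * ((1 + q)^-1)%:E)%E x -> ineq f q tau alpha x in
  (condA <-> condB) /\ (condB -> condC) /\ (condC <-> condB').
Proof.
move=> _ _ fx0 t0 d0 /andP[q0 q1] _ _ condA condB condC condB'.
have d0' : (0 <= delta)%E by exact: ltW.
have qq : 0 < q <= q by rewrite q0 lexx.
split; [split|split].
- move=> HA a /andP[a0 aq] x Hx.
  have [a1|a1] := ltP a 1; first by apply: HA => //; rewrite a0 a1.
  have ea : a = 1 by apply/le_anti; rewrite a1 (le_trans aq q1).
  have eq1 : q = 1 by apply/le_anti; rewrite q1 -ea aq.
  subst a q; apply: (limit1 fx0 t0) => b /andP[b0 b1].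
  apply: HA; first by rewrite b0 b1.
  apply: (ball_sub d0' _ Hx); rewrite (ltW b0) ltW //.
- move=> HB a /andP[a0 a1] x Hx.
  have [aq|qa] := leP a q; first by apply: HB => //; rewrite a0 aq.
  apply: (ineq_mono t0 (phi_le _ _)); rewrite ?q0 ?q1 ?a0 ?a1 //.
  apply: HB => //; apply: (ball_sub d0' _ Hx); rewrite (ltW q0) ltW //.
- by move=> HB x Hx; apply: HB.
- split.
  + move=> HC a /andP[a0 aq] x Hx.
    have [aq'|] := ltP a q.
      apply: (ineq_mono t0 (phi_le _ _)); rewrite ?q0 ?q1 ?a0 ?(lt_le_trans aq') //.
      exact: HC.
    move=> qa; have -> : a = q by apply/le_anti; rewrite aq qa.
    exact: HC.
  + by move=> HB x Hx; apply: HB.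
Qed.
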